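(* Consider the two ''pruning relations'' among directed graphs on vertex set $[n]$ (for distinct $i,j,k$): (Pruning V) $\{(i,j),(i,k)\} = \{(i,j),(j,k)\} - \{(i,k),(k,j)\}$, and (Pruning A) $\{(i,k),(j,k)\} = \{(i,j),(j,k)\} - \{(j,i),(i,k)\}$, whose left-hand term is called the join term. A multiple of one of these relations is obtained by adding the same set $E$ of additional directed edges to each of its three terms, such that none of the three resulting graphs contains a loop (a cycle of the underlying undirected multigraph, oriented or not). Then in every multiple of either pruning relation, the term built from the join term has defect strictly larger than the defect of each of the other two terms.
   Context: For a directed forest (a directed graph whose underlying undirected multigraph has no cycles), a pair of distinct vertices in the same connected component is unordered if there is no directed path of edges from one to the other. The defect of a tree is its number of unordered pairs of vertices, and the defect of a forest is the sum of the defects of its connected components. *)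

(* Defs.v *)
From mathcomp Require Import all_boot.
Set Implicit Arguments. Unset Strict Implicit. Unset Printing Implicit Defensive.

(* A directed (multi)graph on vertex set [n] = 'I_n is given by a list of
   directed edges (u, v) : 'I_n * 'I_n (a list, so that repeated edges are
   kept as parallel edges of the multigraph). *)
Definition dedge (n : nat) := ('I_n * 'I_n)%type.

Definition urel n (es : seq (dedge n)) : rel 'I_n :=
  fun u v => has (fun e : dedge n =>
    ((e.1 == u) && (e.2 == v)) || ((e.1 == v) && (e.2 == u))) es.

Definition drel n (es : seq (dedge n)) : rel 'I_n := fun u v => (u, v) \in es.

(* The underlying undirected multigraph has no cycle (oriented or not):
   every edge (occurrence) is a bridge, i.e. its endpoints are not connected
   by the remaining edges.  A self-loop or a pair of parallel / antiparallel
   edges is a cycle and is excluded by this definition. *)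
Definition is_forest n (es : seq (dedge n)) : Prop :=
  forall (s1 s2 : seq (dedge n)) (e : dedge n),
    es = s1 ++ e :: s2 -> ~~ connect (urel (s1 ++ s2)) e.1 e.2.

(* Defect: number of unordered pairs {u,v} of distinct vertices in the same
   connected component with no directed path from one to the other.  (Sum
   over components of the per-tree defect = count over all such pairs.) *)
Definition defect n (es : seq (dedge n)) : nat :=
  #|[set p : 'I_n * 'I_n | [&& (p.1 < p.2)%N,
       connect (urel es) p.1 p.2,
       ~~ connect (drel es) p.1 p.2 &
       ~~ connect (drel es) p.2 p.1]]|.

Definition add_edges n (base : seq (dedge n)) (E : {set dedge n}) : seq (dedge n) :=
  base ++ enum E.

Definition pruneV_join n (i j k : 'I_n) : seq (dedge n) := [:: (i, j); (i, k)].
Definition pruneV_t1 n (i j k : 'I_n) : seq (dedge n) := [:: (i, j); (j, k)].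
Definition pruneV_t2 n (i j k : 'I_n) : seq (dedge n) := [:: (i, k); (k, j)].

Definition pruneA_join n (i j k : 'I_n) : seq (dedge n) := [:: (i, k); (j, k)].
Definition pruneA_t1 n (i j k : 'I_n) : seq (dedge n) := [:: (i, j); (j, k)].
Definition pruneA_t2 n (i j k : 'I_n) : seq (dedge n) := [:: (j, i); (i, k)].

(* Main.v *)
Require Import Defs.
From mathcomp Require Import all_boot.
Set Implicit Arguments. Unset Strict Implicit. Unset Printing Implicit Defensive.

Section H.
Variable n : nat.
Implicit Types (es ts : seq (dedge n)).

Lemma urel_sym es : symmetric (urel es).
Proof.
move=> x y; apply/hasP/hasP => -[e he H]; exists e => //; by rewrite orbC.
Qed.

Lemma usym es (x y : 'I_n) : connect (urel es) x y = connect (urel es) y x.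
Proof. exact: (sym_connect_sym (@urel_sym es)). Qed.

Lemma urel_in es (x y : 'I_n) : (x, y) \in es -> urel es x y.
Proof. by move=> H; apply/hasP; exists (x, y) => //=; rewrite !eqxx. Qed.

Lemma urel_inc es (x y : 'I_n) : (x, y) \in es -> connect (urel es) x y.
Proof. by move=> H; apply: connect1; apply: urel_in. Qed.

Lemma drel_inc es (x y : 'I_n) : (x, y) \in es -> connect (drel es) x y.
Proof. by move=> H; apply: connect1. Qed.

Lemma out_stay (s1 s2 : seq (dedge n)) (a b x : 'I_n) :
  ~~ connect (urel (s1 ++ s2)) a b ->
  connect (drel (s1 ++ (a, b) :: s2)) b x -> connect (urel (s1 ++ s2)) b x.
Proof.
move=> nab /connectP[p hp ->]; move: hp.
suff: forall y, connect (urel (s1 ++ s2)) b y -> path (drel (s1 ++ (a, b) :: s2)) y p ->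
  connect (urel (s1 ++ s2)) b (last y p) by move=> H hp; apply: H.
elim: p => //= z p IH y hby /andP[hyz hp].
apply: IH => //.
move: hyz; rewrite /drel mem_cat inE => /orP[h|/orP[/eqP[hy hz]|h]].
- by apply: connect_trans hby (urel_inc _); rewrite mem_cat h.
- by rewrite hy usym in hby; rewrite hby in nab.
- by apply: connect_trans hby (urel_inc _); rewrite mem_cat h orbT.
Qed.

Lemma in_stay (s1 s2 : seq (dedge n)) (a b x : 'I_n) :
  ~~ connect (urel (s1 ++ s2)) a b ->
  connect (drel (s1 ++ (a, b) :: s2)) x a -> connect (urel (s1 ++ s2)) x a.
Proof.
move=> nab /connectP[p hp hl].
elim: p x hp hl => [|z p IH] y /=; first by move=> _ ->.
move=> /andP[hyz hp] hl; have hza := IH z hp hl.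
move: hyz; rewrite /drel mem_cat inE => /orP[h|/orP[/eqP[_ hz]|h]].
- by apply: connect_trans hza; apply: urel_inc; rewrite mem_cat h.
- by rewrite hz usym in hza; rewrite hza in nab.
- by apply: connect_trans hza; apply: urel_inc; rewrite mem_cat h orbT.
Qed.

Lemma defect_lt es ts (u v : 'I_n) :
  (forall e, e \in ts -> connect (urel es) e.1 e.2) ->
  (forall e, e \in es -> connect (drel ts) e.1 e.2) ->
  u != v -> connect (urel es) u v -> ~~ connect (drel es) u v ->
  ~~ connect (drel es) v u -> connect (drel ts) u v ->
  defect ts < defect es.
Proof.
move=> Hu Hd nuv cuv n1 n2 ct.
have su : subrel (connect (urel ts)) (connect (urel es)).
  apply: connect_sub => x y /hasP[e he /orP[/andP[/eqP<- /eqP<-]|/andP[/eqP<- /eqP<-]]].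
    exact: Hu.
  by rewrite usym; apply: Hu.
have sd : subrel (connect (drel es)) (connect (drel ts)).
  by apply: connect_sub => x y h; apply: (Hd (x, y)).
apply: proper_card; apply/properP; split.
  apply/subsetP => p; rewrite !inE => /and4P[h1 h2 h3 h4].
  rewrite h1 (su _ _ h2) /=; apply/andP; split; apply/negP => /sd; [move/negP: h3|move/negP: h4]; by [].
have ct2 : connect (drel ts) u v || connect (drel ts) v u by rewrite ct.
case: (ltngtP u v) => [h|h|/val_inj e]; last by rewrite e eqxx in nuv.
- exists (u, v); rewrite !inE /=.
    by apply/and4P; split.
  by apply/negP => /and4P[_ _ a1 a2]; move: ct2; rewrite (negbTE a1) (negbTE a2).
- exists (v, u); rewrite !inE /=.
    by apply/and4P; split; rewrite // usym.
  by apply/negP => /and4P[_ _ a1 a2]; move: ct2; rewrite (negbTE a1) (negbTE a2).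
Qed.
End H.

Ltac edge := apply: urel_inc; rewrite /= ?mem_cat ?inE ?eqxx ?orbT //.
Ltac edgeE h := apply: urel_inc; rewrite /add_edges mem_cat h orbT //.
Ltac dedgeE h := apply: drel_inc; rewrite /add_edges /drel mem_cat h orbT //.
Ltac dedge := apply: drel_inc; rewrite /= ?mem_cat ?inE ?eqxx ?orbT //.

Theorem lemma5p10 (n : nat) (i j k : 'I_n) (E : {set 'I_n * 'I_n}) :
  i != j -> j != k -> i != k ->
  (is_forest (add_edges (pruneV_join i j k) E) ->
   is_forest (add_edges (pruneV_t1 i j k) E) ->
   is_forest (add_edges (pruneV_t2 i j k) E) ->
   defect (add_edges (pruneV_t1 i j k) E) < defect (add_edges (pruneV_join i j k) E) /\
   defect (add_edges (pruneV_t2 i j k) E) < defect (add_edges (pruneV_join i j k) E)) /\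
  (is_forest (add_edges (pruneA_join i j k) E) ->
   is_forest (add_edges (pruneA_t1 i j k) E) ->
   is_forest (add_edges (pruneA_t2 i j k) E) ->
   defect (add_edges (pruneA_t1 i j k) E) < defect (add_edges (pruneA_join i j k) E) /\
   defect (add_edges (pruneA_t2 i j k) E) < defect (add_edges (pruneA_join i j k) E)).
Proof.
move=> nij njk nik; split.
- move=> F _ _.
  have F1 := F [::] ((i,k) :: enum E) (i,j) erefl.
  have F2 := F [:: (i,j)] (enum E) (i,k) erefl.
  have njk' : ~~ connect (drel (add_edges (pruneV_join i j k) E)) j k.
    apply/negP => /(out_stay F1) c; move/negP: F1; apply.
    apply: connect_trans (_ : connect _ i k) _; first by edge.
    by rewrite usym.
  have nkj' : ~~ connect (drel (add_edges (pruneV_join i j k) E)) k j.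
    apply/negP => /(out_stay F2) c; move/negP: F2; apply.
    apply: connect_trans (_ : connect _ i j) _; first by edge.
    by rewrite usym.
  have cjk : connect (urel (add_edges (pruneV_join i j k) E)) j k.
    apply: connect_trans (_ : connect _ j i) _; [rewrite usym|]; edge.
  split.
  + apply: (@defect_lt _ _ _ j k) => //; last by dedge.
    * case=> x y; rewrite /= mem_cat !inE => /orP[/orP[/eqP[-> ->]|/eqP[-> ->]]|h]; first by edge.
        exact: cjk.
      edgeE h.
    * case=> x y; rewrite /= mem_cat !inE => /orP[/orP[/eqP[-> ->]|/eqP[-> ->]]|h]; first by dedge.
        by apply: connect_trans (_ : connect _ i j) _; dedge.
      dedgeE h.
  + apply: (@defect_lt _ _ _ k j); [ | | by rewrite eq_sym | by rewrite usym | by [] | by [] | by dedge].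
    * case=> x y; rewrite /= mem_cat !inE => /orP[/orP[/eqP[-> ->]|/eqP[-> ->]]|h]; first by edge.
        by rewrite usym.
      edgeE h.
    * case=> x y; rewrite /= mem_cat !inE => /orP[/orP[/eqP[-> ->]|/eqP[-> ->]]|h].
        by apply: connect_trans (_ : connect _ i k) _; dedge.
        dedge.
      dedgeE h.
- move=> F _ _.
  have F1 := F [::] ((j,k) :: enum E) (i,k) erefl.
  have F2 := F [:: (i,k)] (enum E) (j,k) erefl.
  have nij' : ~~ connect (drel (add_edges (pruneA_join i j k) E)) i j.
    apply/negP => /(in_stay F2) c; move/negP: F2; apply.
    apply: connect_trans (_ : connect _ j i) _; [by rewrite usym | edge].
  have nji' : ~~ connect (drel (add_edges (pruneA_join i j k) E)) j i.
    apply/negP => /(in_stay F1) c; move/negP: F1; apply.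
    apply: connect_trans (_ : connect _ i j) _; [by rewrite usym | edge].
  have cij : connect (urel (add_edges (pruneA_join i j k) E)) i j.
    apply: connect_trans (_ : connect _ i k) _; [|rewrite usym]; edge.
  split.
  + apply: (@defect_lt _ _ _ i j) => //; last by dedge.
    * case=> x y; rewrite /= mem_cat !inE => /orP[/orP[/eqP[-> ->]|/eqP[-> ->]]|h].
          exact: cij.
        edge.
      edgeE h.
    * case=> x y; rewrite /= mem_cat !inE => /orP[/orP[/eqP[-> ->]|/eqP[-> ->]]|h].
          by apply: connect_trans (_ : connect _ i j) _; dedge.
        dedge.
      dedgeE h.
  + apply: (@defect_lt _ _ _ j i); [ | | by rewrite eq_sym | by rewrite usym | by [] | by [] | by dedge].
    * case=> x y; rewrite /= mem_cat !inE => /orP[/orP[/eqP[-> ->]|/eqP[-> ->]]|h].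
          by rewrite usym.
        edge.
      edgeE h.
    * case=> x y; rewrite /= mem_cat !inE => /orP[/orP[/eqP[-> ->]|/eqP[-> ->]]|h].
          dedge.
        by apply: connect_trans (_ : connect _ j i) _; dedge.
      dedgeE h.
Qed.
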